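(* Let $k\ge 4$ and $n\ge 11k$. Then for every ordered $k$-tuple $S=(v_1,\dots,v_k)\in V(Q_n)^k$ of vertices of $Q_n$ (repetitions allowed), there exists an $S$-subdivided closed walk in $Q_n$.
   Context: $Q_n$ is the $n$-dimensional discrete binary cube: vertex set $\{0,1\}^n$, two vectors adjacent iff they differ in exactly one coordinate. For a graph $G$ and $S=(v_1,\dots,v_k)\in V(G)^k$ (repetitions permitted), with indices taken modulo $k$, an $S$-subdivided closed walk is a sequence $W=(v_1,P_1,v_2,P_2,\dots,v_k,P_k,v_1)$ such that each $P_i$ is a $v_i$–$v_{i+1}$ path in $G$, no two of the paths $P_i,P_j$ ($i\ne j$) share an internal vertex, $P_i$ is trivial if $v_i=v_{i+1}$, and $P_i$ has length at least $2$ if $v_i\ne v_{i+1}$. *)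

(* Defs.v *)
From mathcomp Require Import all_boot.
Set Implicit Arguments. Unset Strict Implicit. Unset Printing Implicit Defensive.

Definition cube_vertex (n : nat) := {ffun 'I_n -> bool}.

Definition cube_adj (n : nat) : rel (cube_vertex n) :=
  fun x y => #|[set i : 'I_n | x i != y i]| == 1.

(* A (graph) path in the graph (V, e) from a to b, given as its full vertex
   sequence p = [:: a; ...; b]: consecutive vertices adjacent, all distinct.
   Its length (number of edges) is (size p).-1. *)
Definition is_path (V : finType) (e : rel V) (a b : V) (p : seq V) : Prop :=
  [/\ p != [::], head a p = a, last a p = b, path e a (behead p) & uniq p].

Definition internal (V : eqType) (p : seq V) : seq V := drop 1 (take (size p).-1 p).

Definition subdivided_closed_walk (V : finType) (e : rel V) (k : nat)
    (S : 'I_k -> V) (P : 'I_k -> seq V) : Prop :=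
  [/\ forall i, is_path e (S i) (S (ordS i)) (P i),
      forall i j, i != j -> forall x, x \in internal (P i) -> x \notin internal (P j),
      forall i, S i = S (ordS i) -> P i = [:: S i]
    & forall i, S i != S (ordS i) -> 2 <= (size (P i)).-1].

(* Main.v *)
Require Import Defs.
From mathcomp Require Import all_boot zify.
Set Implicit Arguments. Unset Strict Implicit. Unset Printing Implicit Defensive.

Section Walk.
Variable n : nat.
Local Notation V := (cube_vertex n).

Definition fl (a : V) (s : seq 'I_n) : V := [ffun j => a j (+) odd (count_mem j s)].

Lemma flE a s j : fl a s j = a j (+) odd (count_mem j s).
Proof. by rewrite ffunE. Qed.

Lemma fl0 a : fl a [::] = a.
Proof. by apply/ffunP => j; rewrite flE /= addbF. Qed.

Lemma fl_cat a s1 s2 : fl a (s1 ++ s2) = fl (fl a s1) s2.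
Proof. by apply/ffunP => j; rewrite !flE count_cat oddD addbA. Qed.

Lemma fl_cons a x s : fl a (x :: s) = fl (fl a [:: x]) s.
Proof. by rewrite -fl_cat. Qed.

Lemma adj_fl1 a c : cube_adj a (fl a [:: c]).
Proof.
rewrite /cube_adj /=.
suff -> : [set i | a i != fl a [:: c] i] = [set c] by rewrite cards1.
apply/setP => i; rewrite !inE flE /= addn0.
by rewrite (eq_sym i c); case: (c == i); case: (a i).
Qed.

Fixpoint walkv (a : V) (s : seq 'I_n) : seq V :=
  if s is x :: s' then a :: walkv (fl a [:: x]) s' else [:: a].

Lemma walkv_eq a s : walkv a s = a :: behead (walkv a s).
Proof. by case: s. Qed.

Lemma walkv_last x a s : last x (walkv a s) = fl a s.
Proof.
elim: s x a => [|y s IH] x a /=; first by rewrite fl0.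
by rewrite IH -fl_cons.
Qed.

Lemma walkv_path a s : path (@cube_adj n) a (behead (walkv a s)).
Proof.
elim: s a => [|y s IH] a //=.
by rewrite walkv_eq /= adj_fl1 -/(behead _) IH.
Qed.

Lemma walkv_size a s : size (walkv a s) = (size s).+1.
Proof. by elim: s a => [|y s IH] a //=; rewrite IH. Qed.

Lemma walkv_mem a s y : y \in walkv a s -> exists2 t, t <= size s & y = fl a (take t s).
Proof.
elim: s a => [|x s IH] a /=.
  by rewrite inE => /eqP ->; exists 0 => //; rewrite fl0.
rewrite inE => /orP [/eqP ->|]; first by exists 0 => //; rewrite fl0.
move=> /IH [t Ht ->]; exists t.+1 => //.
by rewrite /= -fl_cons.
Qed.

Lemma walkv_rcons a s e : walkv a (rcons s e) = rcons (walkv a s) (fl a (rcons s e)).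
Proof.
elim: s a => [|x s IH] a /=; first by [].
by rewrite IH -fl_cons.
Qed.

Lemma internal_walkv a c M e :
  internal (walkv a (c :: rcons M e)) = walkv (fl a [:: c]) M.
Proof.
rewrite /internal /= walkv_rcons size_rcons walkv_size /=.
by rewrite -cats1 take_size_cat ?walkv_size // drop0.
Qed.

Lemma take_mono (T : eqType) (s : seq T) t t' x :
  t <= t' -> x \in take t s -> x \in take t' s.
Proof. by move=> H; rewrite -(take_takel s H) => /mem_take. Qed.

Lemma walkv_uniq a s : uniq s -> uniq (walkv a s).
Proof.
elim: s a => [|x s IH] a //= /andP [xs us].
rewrite IH // andbT; apply/negP => /walkv_mem [t _ E].
have : fl (fl a [:: x]) (take t s) x = a x.
  by rewrite -E.
rewrite !flE /= eqxx /=.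
have -> : count_mem x (take t s) = 0.
  by apply/eqP; rewrite -leqn0 leqNgt -has_count has_pred1; apply/negP => /mem_take; apply/negP.
by case: (a x).
Qed.

End Walk.

Section Block.
Variable n : nat.
Local Notation V := (cube_vertex n).

Lemma fl_memE (w z : V) M t y0 : uniq M ->
  (fl w (take t M) y0 != z y0) = (w y0 != z y0) (+) (y0 \in take t M).
Proof.
move=> uM; rewrite flE count_uniq_mem ?take_uniq //.
by case: (w y0); case: (z y0); case: (y0 \in take t M).
Qed.

Lemma block2 (R : pred 'I_n) (g : 'I_n -> 'I_n) (w z : V) (M : seq 'I_n)
    (A : {set 'I_n}) :
  uniq M -> {in A &, injective g} ->
  (forall c, c \in A -> R (g c) /\ exists2 t, t <= size M &
      forall y0, R y0 -> (fl w (take t M) y0 != z y0) = (y0 == g c)) ->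
  #|A| <= 2.
Proof.
move=> uM ginj H.
have key : forall c c', c \in A -> c' \in A ->
    (w (g c) != z (g c)) = (w (g c') != z (g c')) -> c = c'.
  move=> c c' Ac Ac' Hu; apply: ginj => //; case: (boolP (g c == g c')) => [/eqP //|Hne]; exfalso.
  have [Rp [t _ Ht]] := H c Ac; have [Rp' [t' _ Ht']] := H c' Ac'.
  have h1 := Ht _ Rp; have h2 := Ht _ Rp'; have h3 := Ht' _ Rp'; have h4 := Ht' _ Rp.
  rewrite !fl_memE // in h1 h2 h3 h4.
  have Hne' : (g c' == g c) = false by rewrite eq_sym (negbTE Hne).
  rewrite eqxx in h1; rewrite eqxx in h3; rewrite Hne' in h2; rewrite (negbTE Hne) in h4.
  rewrite -Hu in h2 h3.
  case/orP: (leq_total t t') => le.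
    have m1 := @take_mono _ M _ _ (g c) le; have m2 := @take_mono _ M _ _ (g c') le.
    move: h1 h2 h3 h4 m1 m2.
    case: (w (g c) != z (g c)); case: (g c \in take t M); case: (g c' \in take t M);
      case: (g c \in take t' M); case: (g c' \in take t' M) => /= h1 h2 h3 h4 m1 m2; first [congruence | by have := m1 isT | by have := m2 isT].
  have m1 := @take_mono _ M _ _ (g c) le; have m2 := @take_mono _ M _ _ (g c') le.
  move: h1 h2 h3 h4 m1 m2.
  case: (w (g c) != z (g c)); case: (g c \in take t M); case: (g c' \in take t M);
    case: (g c \in take t' M); case: (g c' \in take t' M) => /= h1 h2 h3 h4 m1 m2; first [congruence | by have := m1 isT | by have := m2 isT].
set B := [set c | w (g c) != z (g c)].
rewrite -(cardsID B A).
have le1 : forall X : {set 'I_n}, X \subset A ->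
   {in X &, forall c c', (w (g c) != z (g c)) = (w (g c') != z (g c'))} -> #|X| <= 1.
  move=> X sXA HX; apply/card_le1_eqP => x y Xx Xy.
  apply: key; [exact: (subsetP sXA) | exact: (subsetP sXA) | exact: HX].
rewrite (_ : 2 = 1 + 1) // leq_add //; apply: le1.
- exact: subsetIl.
- by move=> x y /setIP [_]; rewrite inE => -> /setIP [_]; rewrite inE => ->.
- exact: subsetDl.
- by move=> x y /setDP [_]; rewrite inE => /negbTE -> /setDP [_]; rewrite inE => /negbTE ->.
Qed.

End Block.

Section Build.
Variables (n k : nat) (a b : cube_vertex n).
Local Notation V := (cube_vertex n).

Definition Dset : {set 'I_n} := [set j | a j != b j].
Fact Dl_key : unit. Proof. exact: tt. Qed.
Definition Dl := locked_with Dl_key (enum Dset).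
Definition condF1 := 2 * k <= #|~: Dset|.+1.
Definition rr := size Dl %/ 2.
Definition R1 := take rr Dl.
Definition R2 : pred 'I_n := fun y => (y \in Dl) && (y \notin R1).
Definition phi (c : 'I_n) := nth c Dl (index c Dl + rr).
Definition mid1 c := [seq y <- Dl | (y \notin R1) && (y != phi c)].
Definition mid2 c := [seq y <- Dl | (y \in R1) && (y != c)].
Definition Ml c := if condF1 then Dl else mid1 c ++ mid2 c.
Definition el c := if condF1 then c else phi c.
Definition build c := if a == b then [:: a] else walkv a (c :: rcons (Ml c) (el c)).
Definition cand : {set 'I_n} :=
  if a == b then setT else if condF1 then ~: Dset else [set c | c \in R1].
Definition bnd := if a == b then 0 else if condF1 then 2 else 4.

Lemma Dl_uniq : uniq Dl.
Proof. by rewrite /Dl unlock enum_uniq. Qed.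

Lemma mem_Dl y : (y \in Dl) = (a y != b y).
Proof. by rewrite /Dl unlock mem_enum inE. Qed.

Lemma fl_perm (s1 s2 : seq 'I_n) (w : V) : perm_eq s1 s2 -> fl w s1 = fl w s2.
Proof. by move=> /permP H; apply/ffunP => j; rewrite !flE H. Qed.

Lemma fl_Dl : fl a Dl = b.
Proof.
apply/ffunP => j; rewrite flE count_uniq_mem ?Dl_uniq // mem_Dl.
by case: (a j); case: (b j).
Qed.


Lemma internal_build c :
  internal (build c) = if a == b then [::] else walkv (fl a [:: c]) (Ml c).
Proof. by rewrite /build; case: (a == b) => //; rewrite internal_walkv. Qed.

End Build.
Section Build2.
Variables (n k : nat) (a b : cube_vertex n).
Local Notation V := (cube_vertex n).

Lemma Ml_uniq c : uniq (Ml k a b c).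
Proof.
rewrite /Ml; case: condF1; first exact: Dl_uniq.
rewrite cat_uniq (filter_uniq _ (Dl_uniq a b)) (filter_uniq _ (Dl_uniq a b)) andbT /=.
apply/hasPn => y; rewrite !mem_filter => /andP [/andP [yR1 _] _].
by rewrite yR1.
Qed.
End Build2.
Section Build3.
Variables (n k : nat) (a b : cube_vertex n).
Local Notation V := (cube_vertex n).

Lemma walkv_is_path (x y : V) s : fl x s = y -> uniq (walkv x s) ->
  is_path (@cube_adj n) x y (walkv x s).
Proof.
move=> E u; split => //; first by rewrite walkv_eq.
- by rewrite walkv_eq.
- by rewrite walkv_last.
- exact: walkv_path.
Qed.

Lemma F2facts c : c \in R1 a b ->
  [/\ c \in Dl a b, phi a b c \in Dl a b, phi a b c \notin R1 a b,
      index (phi a b c) (Dl a b) = index c (Dl a b) + rr a b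
    & index c (Dl a b) < rr a b].
Proof.
move=> cR.
have cD : c \in Dl a b by apply: mem_take cR.
have ic : index c (Dl a b) < rr a b by apply: index_ltn.
have h2 : rr a b * 2 <= size (Dl a b) by rewrite /rr leq_divM.
have lt : index c (Dl a b) + rr a b < size (Dl a b) by lia.
have ip : index (phi a b c) (Dl a b) = index c (Dl a b) + rr a b.
  by rewrite /phi index_uniq ?Dl_uniq.
have pD : phi a b c \in Dl a b by rewrite /phi mem_nth.
split => //.
by rewrite /R1 in_take // ip -leqNgt leq_addl.
Qed.

End Build3.
Section Build4.
Variables (n k : nat) (a b : cube_vertex n).
Local Notation V := (cube_vertex n).

Lemma build_path c : a != b -> c \in cand k a b ->
  is_path (@cube_adj n) a b (build k a b c) /\ 2 <= (size (build k a b c)).-1.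
Proof.
move=> ab Hc; rewrite /build (negbTE ab).
split; last by rewrite walkv_size /= size_rcons.
rewrite /cand (negbTE ab) in Hc.
rewrite /Ml /el; case: ifP => F1 in Hc *.
-
  have cD : a c = b c by move: Hc; rewrite inE inE negbK => /eqP.
  have cnD : c \notin Dl a b by rewrite mem_Dl cD eqxx.
  apply: walkv_is_path.
    rewrite -{2}(fl_Dl a b); apply/ffunP => j; rewrite !flE /= -cats1 count_cat /=.
    by rewrite addn0 addnCA addnn oddD odd_double addbF.
  rewrite /= walkv_rcons /= rcons_uniq walkv_uniq ?Dl_uniq // andbT.
  have Hm : forall y, y \in walkv (fl a [:: c]) (Dl a b) -> y c = ~~ a c.
    move=> y /walkv_mem [t _ ->]; rewrite !flE /= eqxx.
    have -> : count_mem c (take t (Dl a b)) = 0.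
      apply/eqP; rewrite -leqn0 leqNgt -has_count has_pred1.
      by apply/negP => /mem_take; apply/negP.
    by case: (a c).
  have Ef : fl (fl a [:: c]) (rcons (Dl a b) c) = b.
    rewrite -{2}(fl_Dl a b) -fl_cons; apply/ffunP => j; rewrite !flE /= -cats1 count_cat /=.
    by rewrite addn0 addnCA addnn oddD odd_double addbF.
  rewrite Ef mem_rcons inE negb_or ab /=.
  apply/andP; split.
  + by apply/negP => /Hm; case: (a c).
  + by apply/negP => /Hm; rewrite -cD; case: (a c).
-
  have cR : c \in R1 a b by move: Hc; rewrite inE.
  have [cD pD pR ip ic] := F2facts cR.
  set s := c :: rcons _ _.
  have cp : c != phi a b c by apply/negP => /eqP E; rewrite -E cR in pR.
  have us : uniq s.
    rewrite /s /= rcons_uniq mem_rcons inE negb_or cp /= !mem_cat !negb_or.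
    rewrite /mid1 /mid2 !mem_filter cR !eqxx /= ?andbF /= (negbTE pR) /=.
    rewrite cat_uniq (filter_uniq _ (Dl_uniq a b)) (filter_uniq _ (Dl_uniq a b)) andbT /=.
    apply/hasPn => y; rewrite !mem_filter => /andP [/andP [yR1 _] _].
    by rewrite yR1.
  have ps : perm_eq s (Dl a b).
    apply: uniq_perm => //; first exact: Dl_uniq.
    move=> y; rewrite /s in_cons mem_rcons in_cons mem_cat /mid1 /mid2 !mem_filter.
    case: (eqVneq y c) => [->|ync]; first by rewrite cD.
    case: (eqVneq y (phi a b c)) => [->|ynp]; first by rewrite orbT pD.
    rewrite /=; case: (y \in R1 a b) => /=; by rewrite ?orbF.
  apply: walkv_is_path; first by rewrite (fl_perm _ ps) fl_Dl.
  exact: walkv_uniq.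
Qed.

End Build4.
Section Build5.
Variables (n k : nat) (a b : cube_vertex n).
Local Notation V := (cube_vertex n).

Lemma b_val y0 : b y0 = a y0 (+) (y0 \in Dl a b).
Proof. by rewrite -{1}(fl_Dl a b) flE count_uniq_mem ?Dl_uniq //; case: (_ \in _). Qed.

Lemma build_sig c x : a != b -> c \in cand k a b -> x \in internal (build k a b c) ->
  if condF1 k a b then (forall y0, y0 \in ~: Dset a b -> (x y0 != a y0) = (y0 == c))
  else (forall y0, y0 \in R1 a b -> (x y0 != a y0) = (y0 == c)) \/
       (forall y0, R2 a b y0 -> (x y0 != b y0) = (y0 == phi a b c)).
Proof.
move=> ab Hc; rewrite internal_build (negbTE ab) => /walkv_mem [t Ht ->].
rewrite -fl_cons; rewrite /cand (negbTE ab) in Hc; move: Ht; rewrite /Ml.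
case: ifP => F1 in Hc * => Ht.
- move=> y0 Hy; have yD : y0 \notin Dl a b by rewrite mem_Dl; move: Hy; rewrite !inE.
  rewrite flE /= (count_memPn _) ?addn0; last by apply/negP => /mem_take; apply/negP.
  by rewrite (eq_sym c y0); case: (y0 == c); case: (a y0).
- have cR : c \in R1 a b by move: Hc; rewrite inE.
  have [cD pD pR ip ic] := F2facts cR.
  rewrite take_cat; case: ifP => ht.
  + left => y0 Hy.
    rewrite flE /= (count_memPn _) ?addn0; last first.
      apply/negP => /mem_take; rewrite /mid1 mem_filter Hy; done.
    by rewrite (eq_sym c y0); case: (y0 == c); case: (a y0).
  + right => y0 /andP [yD yR].
    have cy : (c == y0) = false by apply/negP => /eqP E; rewrite -E cR in yR.
    have h0 : forall u, count_mem y0 (take u (mid2 a b c)) = 0.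
      by move=> u; apply/count_memPn/negP => /mem_take; rewrite /mid2 mem_filter (negbTE yR).
    rewrite b_val yD flE /= count_cat cy add0n h0.
    rewrite count_uniq_mem ?(filter_uniq _ (Dl_uniq a b)) // /mid1 mem_filter yR yD /= addn0.
    by case: (y0 == phi a b c); case: (a y0).
Qed.

End Build5.
Section Build6.
Variables (n k : nat) (a b : cube_vertex n).
Local Notation V := (cube_vertex n).

Lemma phi_inj : {in R1 a b &, injective (phi a b)}.
Proof.
move=> c c' cR cR' E.
have [cD _ _ ip _] := F2facts cR; have [cD' _ _ ip' _] := F2facts cR'.
have : index c (Dl a b) = index c' (Dl a b) by apply/eqP; rewrite -(eqn_add2r (rr a b)) -ip -ip' E.
exact: (index_inj c cD cD').
Qed.

Lemma card_setU_le (T : finType) (A B : {set T}) : #|A :|: B| <= #|A| + #|B|.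
Proof. by rewrite cardsU leq_subr. Qed.

Lemma build_block (W : seq V) (w : V) (M : seq 'I_n) : uniq M ->
  (forall x, x \in W -> exists2 t, t <= size M & x = fl w (take t M)) ->
  #|[set c in cand k a b | [exists x, (x \in internal (build k a b c)) && (x \in W)]]|
    <= bnd k a b.
Proof.
move=> uM HW; set X := [set c in _ | _].
case ab: (a == b).
  rewrite /bnd ab leqn0 cards_eq0; apply/eqP/setP => c; rewrite !inE.
  apply/negP => /andP [_ /existsP [x /andP [xi _]]].
  by rewrite internal_build ab in xi.
have ab' : a != b by rewrite ab.
have HX : forall c, c \in X -> c \in cand k a b /\ exists2 x, x \in W & x \in internal (build k a b c).
  move=> c; rewrite inE => /andP [cc /existsP [x /andP [xi xW]]]; split => //; by exists x.
rewrite /bnd ab; case F1: (condF1 k a b).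
  apply: (@block2 n (mem (~: Dset a b)) id w a M X uM); first by move=> ? ? _ _.
  move=> c /HX [cc [x xW xi]].
  have := build_sig ab' cc xi; rewrite F1 => sig.
  have cc' := cc; rewrite /cand ab F1 in cc'.
  split => //; have [t Ht Ex] := HW x xW; exists t => //; by rewrite -Ex.
set X1 := [set c in X | [exists x, (x \in W) &&
   [forall y0, (y0 \in R1 a b) ==> ((x y0 != a y0) == (y0 == c))]]].
set X2 := [set c in X | [exists x, (x \in W) &&
   [forall y0, R2 a b y0 ==> ((x y0 != b y0) == (y0 == phi a b c))]]].
have sX : X \subset X1 :|: X2.
  apply/subsetP => c cX; have [cc [x xW xi]] := HX c cX.
  have := build_sig ab' cc xi; rewrite F1 => -[sig|sig]; apply/setUP.
    left; apply/setIdP; split => //; apply/existsP; exists x; rewrite xW /=; apply/forallP => y0; apply/implyP => Hy.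
    by rewrite sig.
  right; apply/setIdP; split => //; apply/existsP; exists x; rewrite xW /=; apply/forallP => y0; apply/implyP => Hy.
  by rewrite sig.
apply: leq_trans (subset_leq_card sX) _; apply: leq_trans (card_setU_le _ _) _.
have XR : forall c, c \in X -> c \in R1 a b.
  by move=> c /HX [cc _]; move: cc; rewrite /cand ab F1 inE.
rewrite (_ : 4 = 2 + 2) //; apply: leq_add.
  apply: (@block2 n (mem (R1 a b)) id w a M X1 uM); first by move=> ? ? _ _.
  move=> c /setIdP [cX /existsP [x /andP [xW /forallP sig]]].
  split; first exact: XR.
  have [t Ht Ex] := HW x xW; exists t => // y0 Hy.
  by rewrite -Ex; move/implyP: (sig y0) => /(_ Hy) /eqP.
apply: (@block2 n (R2 a b) (phi a b) w b M X2 uM).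
  move=> c c' /setIdP [cX _] /setIdP [cX' _]; apply: phi_inj; exact: XR.
move=> c /setIdP [cX /existsP [x /andP [xW /forallP sig]]].
split.
  have [cD pD pR _ _] := F2facts (XR c cX); by rewrite /R2 pD pR.
have [t Ht Ex] := HW x xW; exists t => // y0 Hy.
by rewrite -Ex; move/implyP: (sig y0) => /(_ Hy) /eqP.
Qed.

End Build6.
Section Build7.
Variables (n k : nat) (a b : cube_vertex n).

Lemma size_Dl : size (Dl a b) = #|Dset a b|.
Proof. by rewrite /Dl unlock -cardE. Qed.

Lemma cand_card : 4 <= k -> 11 * k <= n -> bnd k a b * k.-1 < #|cand k a b|.
Proof.
move=> hk hn; rewrite /bnd /cand; case: (a == b).
  by rewrite cardsT card_ord; lia.
have hC := cardsC (Dset a b); rewrite card_ord in hC.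
case: ifP; rewrite /condF1 => F1; first by lia.
rewrite cardsE; move/card_uniqP: (take_uniq (rr a b) (Dl_uniq a b)) => ->.
rewrite size_take size_Dl /rr size_Dl.
move/negbT: F1; rewrite -ltnNge => F1.
case: ifP => _; lia.
Qed.

End Build7.

Lemma card_bigcup_le (I T : finType) (J : pred I) (B : I -> {set T}) :
  #|\bigcup_(j | J j) B j| <= \sum_(j | J j) #|B j|.
Proof.
elim/big_rec2: _ => [|j X y _ H]; first by rewrite cards0.
by apply: leq_trans (card_setU_le _ _) _; rewrite leq_add2l.
Qed.

Lemma greedy (k n : nat) (x0 : 'I_n) (cand : 'I_k -> {set 'I_n})
    (conf : 'I_k -> 'I_n -> 'I_k -> 'I_n -> bool) (bd : 'I_k -> nat) :
  (forall i c j d, conf i c j d = conf j d i c) ->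
  (forall i j d, i != j -> d \in cand j -> #|[set c in cand i | conf i c j d]| <= bd i) ->
  (forall i, bd i * k.-1 < #|cand i|) ->
  exists ch : 'I_k -> 'I_n,
    (forall i, ch i \in cand i) /\ (forall i j, i != j -> ~~ conf i (ch i) j (ch j)).
Proof.
move=> csym hb hc.
have H : forall m, m <= k -> exists ch : 'I_k -> 'I_n,
    (forall i : 'I_k, i < m -> ch i \in cand i) /\
    (forall i j : 'I_k, i < m -> j < m -> i != j -> ~~ conf i (ch i) j (ch j)).
  elim => [|m IH] hm.
    by exists (fun _ => x0); split => i.
  have [ch [Hc Hn]] := IH (ltnW hm).
  pose im : 'I_k := Ordinal hm.
  pose B := \bigcup_(j : 'I_k | j < m) [set c in cand im | conf im c j (ch j)].
  have cardB : #|B| <= bd im * k.-1.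
    apply: leq_trans (card_bigcup_le _ _) _.
    apply: leq_trans (_ : \sum_(j : 'I_k | j < m) bd im <= _).
      apply: leq_sum => j jm; apply: hb; last exact: Hc.
      by apply/negP => /eqP E; rewrite -E /= ltnn in jm.
    rewrite sum_nat_const mulnC leq_mul2l; apply/orP; right.
    have -> : k.-1 = #|[set~ im]| by rewrite cardsC1 card_ord.
    apply: subset_leq_card; apply/subsetP => j; rewrite !inE => jm.
    have jm' : j < m by exact: jm.
    by apply/negP => /eqP E; rewrite E /= ltnn in jm'.
  have : ~~ (cand im \subset B).
    apply/negP => /subset_leq_card; have := hc im; lia.
  case/subsetPn => c cc cB.
  exists (fun i => if i == im then c else ch i); split.
    move=> i; case: (eqVneq i im) => [->|ne] // im1; apply: Hc.
    have : nat_of_ord i != m by [].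
    lia.
  have nB : forall j : 'I_k, j < m -> ~~ conf im c j (ch j).
    move=> j jm; apply/negP => cf; move/negP: cB; apply.
    by apply/bigcupP; exists j => //; rewrite inE cc.
  have ltm : forall i : 'I_k, i < m.+1 -> i != im -> i < m.
    by move=> i h1 h2; have : nat_of_ord i != m by []; lia.
  move=> i j hi hj ij.
  case: (eqVneq i im) => [ei|ni]; case: (eqVneq j im) => [ej|nj].
  - by rewrite ei ej eqxx in ij.
  - by rewrite ei; apply: nB; apply: ltm.
  - by rewrite ej csym; apply: nB; apply: ltm.
  - by apply: Hn => //; apply: ltm.
have [ch [Hc Hn]] := H k (leqnn k).
by exists ch; split => [i|i j]; [apply: Hc | apply: Hn].
Qed.

Theorem lemma3p9 (k n : nat) : 4 <= k -> 11 * k <= n ->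
  forall S : 'I_k -> cube_vertex n,
  exists P : 'I_k -> seq (cube_vertex n),
    subdivided_closed_walk (@cube_adj n) S P.
Proof.
move=> hk hn S.
have n0 : 0 < n by lia.
pose x0 : 'I_n := Ordinal n0.
pose Pc (i : 'I_k) c := build k (S i) (S (ordS i)) c.
pose conf i c j d := [exists x, (x \in internal (Pc i c)) && (x \in internal (Pc j d))].
have H1 : forall i c j d, conf i c j d = conf j d i c.
  by move=> i c j d; apply: eq_existsb => x; rewrite andbC.
have H2 : forall i j d, i != j -> d \in cand k (S j) (S (ordS j)) ->
    #|[set c in cand k (S i) (S (ordS i)) | conf i c j d]| <= bnd k (S i) (S (ordS i)).
  move=> i j d ij dc.
  apply: (@build_block n k (S i) (S (ordS i)) (internal (Pc j d))
            (fl (S j) [:: d]) (Ml k (S j) (S (ordS j)) d) (Ml_uniq _ _ _ _)).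
  move=> x; rewrite /Pc internal_build; case: ifP => // _.
  by move/walkv_mem.
have H3 : forall i, bnd k (S i) (S (ordS i)) * k.-1 < #|cand k (S i) (S (ordS i))|.
  by move=> i; apply: cand_card.
have [ch [Hc Hn]] := @greedy k n x0 (fun i => cand k (S i) (S (ordS i))) conf
   (fun i => bnd k (S i) (S (ordS i))) H1 H2 H3.
exists (fun i => Pc i (ch i)); split.
- move=> i; case: (eqVneq (S i) (S (ordS i))) => [E|ne].
    rewrite /Pc /build E eqxx; split => //=; by rewrite -E.
  by have [] := build_path ne (Hc i).
- move=> i j ij x xi; apply/negP => xj.
  by move: (Hn i j ij) => /existsPn /(_ x); rewrite xi xj.
- by move=> i E; rewrite /Pc /build E eqxx.
- move=> i ne; by have [] := build_path ne (Hc i).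
Qed.
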